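(* Let $q$ be odd, $\mathrm k\ge1$, $\kappa=\lfloor\mathrm k/2\rfloor$, $\nu\ge1$. Define for $u\in\mathbb S^1_{\mathrm k}$ $$R(u)=\sum_{\substack{f\text{ monic},\ \deg f=\nu,\ f(0)\ne0\\ f\text{ not irreducible},\ U(f)\equiv u\bmod S^{\mathrm k}}}\Lambda(f).$$ Then $$\langle R^2\rangle:=\frac1{q^\kappa}\sum_{u\in\mathbb S^1_{\mathrm k}}R(u)^2\ll_\nu q^{\nu-2\kappa}+q^{\frac23\nu-\kappa},$$ with implied constant depending only on $\nu$.
   Context: $\mathbb F_q$ finite field, $q$ odd; $\sigma(f)(S)=f(-S)$. $\mathbb S^1=\{g\in\mathbb F_q[[S]]:g(0)=1,\ g(S)g(-S)=1\}$ (unique square roots exist in $\mathbb S^1$); for $f\in\mathbb F_q[S]$ with $f(0)\ne0$, $U(f)=\sqrt{f/\sigma(f)}\in\mathbb S^1$. $\mathbb S^1_{\mathrm k}=\{f\in\mathbb F_q[S]/(S^{\mathrm k}): f(0)=1,\ f(S)f(-S)\equiv1\bmod S^{\mathrm k}\}$, of order $q^\kappa$. $\Lambda(f)=\deg P$ if $f=P^j$ for a monic irreducible $P$ and $j\ge1$, and $\Lambda(f)=0$ otherwise. *)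

(* Defs.v *)
From HB Require Import structures.
From mathcomp Require Import all_boot all_order all_algebra.
From Stdlib Require Import ClassicalEpsilon.
Set Implicit Arguments. Unset Strict Implicit. Unset Printing Implicit Defensive.
Import GRing.Theory.
Local Open Scope ring_scope.

Definition decide (P : Prop) : bool :=
  if excluded_middle_informative P then true else false.

Section Defs.
Variable F : finFieldType.

Definition sigma (p : {poly F}) : {poly F} := p \Po (- 'X).

Definition truncS (k : nat) (p : {poly F}) : {poly F} := p %% 'X^k.

(* S^1_k = { f in F_q[S]/(S^k) : f(0) = 1, f(S) f(-S) = 1 mod S^k },
   residues represented by polynomials of size <= k *)
Definition S1k (k : nat) : {set {poly_k F}} :=
  [set u : {poly_k F} | ((val u)`_0 == 1) &&
                        (truncS k (val u * sigma (val u)) == truncS k 1)].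

(* U(f) mod S^k: the element u of S^1_k which is the square root of
   f / sigma(f) mod S^k, i.e. u^2 * sigma(f) = f mod S^k (sigma(f) is
   invertible mod S^k since f(0) <> 0). Square roots in S^1_k are unique
   for q odd, so this is the reduction of U(f) = sqrt(f/sigma f). *)
Definition Umod (k : nat) (f : {poly F}) : option {poly_k F} :=
  [pick u in S1k k | truncS k (val u ^+ 2 * sigma f) == truncS k f].

Definition primepow_base (f : {poly F}) (P : {poly F}) : Prop :=
  P \is monic /\ irreducible_poly P /\ exists j : nat, (0 < j)%N /\ f = P ^+ j.

Definition Lambda (f : {poly F}) : nat :=
  if decide (exists P, primepow_base f P)
  then (size (epsilon (inhabits (0 : {poly F})) (primepow_base f))).-1
  else 0%N.

(* R(u) = sum of Lambda(f) over monic f of degree nu with f(0) <> 0,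
   f not irreducible, U(f) = u mod S^k.  Monic f of degree nu are
   enumerated as elements of {poly_(nu+1) F} of size nu+1. *)
Definition Rfun (k nu : nat) (u : {poly_k F}) : nat :=
  (\sum_(f : {poly_(nu.+1) F} |
          [&& (val f) \is monic, size (val f) == nu.+1, (val f).[0] != 0%R,
              ~~ decide (irreducible_poly (val f)) &
              Umod k (val f) == Some u])
     Lambda (val f))%N.

Definition sumR2 (k nu : nat) : nat :=
  (\sum_(u in S1k k) (Rfun nu u) ^ 2)%N.

End Defs.

(* Main.v *)
Require Import Defs.
From HB Require Import structures.
From mathcomp Require Import all_boot all_order all_algebra.
From mathcomp Require Import all_field.
From mathcomp Require Import zify ring.
From Stdlib Require Import ClassicalEpsilon.
Set Implicit Arguments. Unset Strict Implicit. Unset Printing Implicit Defensive.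

Module Dev.
Import GRing.Theory.
Local Open Scope ring_scope.


Local Open Scope nat_scope.
Lemma card_ord_sum n (P : pred nat) : #|[pred i : 'I_n | P i]| = \sum_(i < n) P i.
Proof.
rewrite -sum1_card big_mkcond /=; apply: eq_bigr => i _; rewrite inE; by case: (P i).
Qed.

Lemma cnt_odd_lt n k : #|[pred i : 'I_n | odd i && (i < k)]| = (minn n k)./2.
Proof.
rewrite (card_ord_sum n (fun i => odd i && (i < k))); elim: n => [|n IH]; first by rewrite big_ord0 min0n.
rewrite big_ord_recr /= IH.
case: (ltnP n k) => h /=; rewrite ?andbT ?andbF; lia.
Qed.

Lemma cnt_keep2 n k : #|[pred i : 'I_n | ~~ (odd i && (i < k))]| = n - (minn n k)./2.
Proof.
have := cardC [pred i : 'I_n | odd i && (i < k)]; rewrite card_ord cnt_odd_lt.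
have -> : #|[pred i : 'I_n | ~~ (odd i && (i < k))]| = #|[predC [pred i : 'I_n | odd i && (i < k)]]|.
  by apply: eq_card => i; rewrite !inE.
lia.
Qed.

Lemma cnt_odd n : #|[pred i : 'I_n | odd i]| = n./2.
Proof.
have := cnt_odd_lt n n; rewrite minnn => <-; apply: eq_card => i; by rewrite !inE ltn_ord andbT.
Qed.

Lemma cnt_even n : #|[pred i : 'I_n | ~~ odd i]| = n - n./2.
Proof.
have := cardC [pred i : 'I_n | odd i]; rewrite card_ord cnt_odd.
have -> : #|[pred i : 'I_n | ~~ odd i]| = #|[predC [pred i : 'I_n | odd i]]|.
  by apply: eq_card => i; rewrite !inE.
lia.
Qed.

Lemma cnt_odd_ge n k : #|[pred i : 'I_n | odd i && ~~ (i < k)]| = n./2 - (minn n k)./2.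
Proof.
have := cardID [pred i : 'I_n | odd i && (i < k)] [pred i : 'I_n | odd i].
rewrite cnt_odd.
have -> : #|[predI [pred i : 'I_n | odd i] & [pred i : 'I_n | odd i && (i < k)]]| = (minn n k)./2.
  by rewrite -cnt_odd_lt; apply: eq_card => i; rewrite !inE; case: (odd i).
have -> : #|[predD [pred i : 'I_n | odd i] & [pred i : 'I_n | odd i && (i < k)]]| =
  #|[pred i : 'I_n | odd i && ~~ (i < k)]|.
  by apply: eq_card => i; rewrite !inE /=; case: (odd i) => //=; rewrite andbT.
lia.
Qed.

Lemma cnt_all n : #|[pred i : 'I_n | predT i]| = n.
Proof. by rewrite -[RHS]card_ord; apply: eq_card. Qed.


Lemma card_set_sum (X : finType) (A : pred X) : #|[set x | A x]| = \sum_x A x.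
Proof.
rewrite -sum1_card big_mkcond /=; apply: eq_bigr => i _; rewrite inE; by case: (A i).
Qed.

Lemma card_pair1 (X Y : finType) (C : X -> Y -> bool) :
  #|[set p : X * Y | C p.1 p.2]| = \sum_x #|[set y | C x y]|.
Proof.
rewrite (@card_set_sum _ (fun p : X * Y => C p.1 p.2)) -(pair_bigA _ (fun x y => (C x y : nat))).
by apply: eq_bigr => x _; rewrite card_set_sum.
Qed.

Lemma card_pair2 (X Y : finType) (C : X -> Y -> bool) :
  #|[set p : X * Y | C p.1 p.2]| = \sum_y #|[set x | C x y]|.
Proof.
rewrite (@card_set_sum _ (fun p : X * Y => C p.1 p.2)) -(pair_bigA _ (fun x y => (C x y : nat))).
rewrite exchange_big; by apply: eq_bigr => x _; rewrite card_set_sum.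
Qed.

Lemma sum_le_card (X : finType) (A : pred X) (f : X -> nat) c :
  (forall x, f x <= A x * c) -> \sum_x f x <= #|[set x | A x]| * c.
Proof.
move=> h; apply: (@leq_trans (\sum_x A x * c)); first by apply: leq_sum => x _; exact: h.
by rewrite card_set_sum big_distrl.
Qed.

Lemma sum_le_card2 (X : finType) (A B : pred X) (f : X -> nat) c d :
  (forall x, f x <= A x * c + B x * d) -> \sum_x f x <= #|[set x | A x]| * c + #|[set x | B x]| * d.
Proof.
move=> h; apply: (@leq_trans (\sum_x (A x * c + B x * d))); first by apply: leq_sum => x _; exact: h.
by rewrite big_split /= !card_set_sum !big_distrl.
Qed.

Local Open Scope ring_scope.
Section Alg.
Variable F : finFieldType.
Hypothesis h2 : (2:F) != 0.

Lemma coef_sigma (p : {poly F}) i : (sigma p)`_i = (-1)^+i * p`_i.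
Proof.
rewrite /sigma coef_comp_poly.
under eq_bigr => j _ do rewrite exprNn -[-1]polyCN -polyC_exp coefCM coefXn.
have [hi|hi] := ltnP i (size p).
  rewrite (bigD1 (Ordinal hi)) //= eqxx mulr1 big1 ?addr0; first by rewrite mulrC.
  move=> j hj; rewrite eq_sym; case: eqP => [hij|]; last by rewrite !mulr0.
  by move: hj; rewrite -(inj_eq val_inj) /= hij eqxx.
rewrite nth_default // mulr0 big1 // => j _.
case: eqP => [hij|]; last by rewrite !mulr0.
by move: (ltn_ord j); rewrite -hij ltnNge hi.
Qed.

Lemma sigmaM (p q : {poly F}) : sigma (p * q) = sigma p * sigma q.
Proof. exact: comp_polyM. Qed.
Lemma sigmaB (p q : {poly F}) : sigma (p - q) = sigma p - sigma q.
Proof. exact: comp_polyB. Qed.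
Lemma sigmaX (p : {poly F}) n : sigma (p ^+ n) = sigma p ^+ n.
Proof. by elim: n => [|n IH]; rewrite ?expr0 ?exprS ?sigmaM ?IH // /sigma comp_polyC. Qed.
Lemma sigmaK (p : {poly F}) : sigma (sigma p) = p.
Proof.
apply/polyP=> i; rewrite !coef_sigma mulrA -exprD addnn -mul2n exprM sqrrN.
by rewrite expr1n expr1n mul1r.
Qed.
Lemma sigma0 (p : {poly F}) : (sigma p).[0] = p.[0].
Proof. by rewrite !horner_coef0 coef_sigma expr0 mul1r. Qed.

Definition rel k (f g : {poly F}) := 'X^k %| f * sigma g - g * sigma f.

Lemma rel_sym k f g : rel k f g -> rel k g f.
Proof. by rewrite /rel -dvdpNr opprB. Qed.

Lemma U0 k (p r : {poly F}) : p.[0] != 0 -> 'X^k %| p * r -> 'X^k %| r.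
Proof.
move=> hp; rewrite mulrC Gauss_dvdpl //.
by apply: coprimep_expl; rewrite coprimep_sym coprimepX /root hp.
Qed.

Lemma rel_trans k f g h : g.[0] != 0 -> rel k f g -> rel k g h -> rel k f h.
Proof.
move=> hg r1 r2; apply: (@U0 k (g * sigma g)).
  by rewrite hornerM sigma0 mulf_neq0.
have -> : g * sigma g * (f * sigma h - h * sigma f) =
  (f * sigma g - g * sigma f) * (g * sigma h) + (g * sigma h - h * sigma g) * (g * sigma f).
  by ring.
by apply: dvdp_add; apply: dvdp_mulr.
Qed.

Lemma rel_lin k f f' g : rel k f g -> rel k f' g -> rel k (f - f') g.
Proof.
move=> r1 r2; rewrite /rel sigmaB.
have -> : (f - f') * sigma g - g * (sigma f - sigma f') =
   (f * sigma g - g * sigma f) - (f' * sigma g - g * sigma f') by ring.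
exact: dvdp_sub.
Qed.

Lemma rel_sq k P Q : P.[0] != 0 -> Q.[0] != 0 -> rel k (P ^+ 2) (Q ^+ 2) -> rel k P Q.
Proof.
move=> hP hQ; rewrite /rel !sigmaX => h.
apply: (@U0 k (P * sigma Q + Q * sigma P)).
  rewrite hornerD !hornerM !sigma0 (mulrC Q.[0]) -mulr2n -mulr_natl mulf_neq0 //.
  by rewrite mulf_neq0.
have -> : (P * sigma Q + Q * sigma P) * (P * sigma Q - Q * sigma P) =
  P ^+ 2 * sigma Q ^+ 2 - Q ^+ 2 * sigma P ^+ 2 by ring.
exact: h.
Qed.

Lemma Umod_rel k f g u : Umod k f = Some u -> Umod k g = Some u -> rel k f g.
Proof.
rewrite /Umod; case: pickP => // u1 /andP[_ h1] [<-].
case: pickP => // u2 /andP[_ h2'] [e]; subst u2.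
move: h1 h2'; rewrite /truncS => /eqP h1 /eqP h2'.
have d1 : 'X^k %| val u1 ^+ 2 * sigma f - f by apply/modp_eq0P; rewrite modpD modpN h1 subrr.
have d2 : 'X^k %| val u1 ^+ 2 * sigma g - g by apply/modp_eq0P; rewrite modpD modpN h2' subrr.
rewrite /rel.
have -> : f * sigma g - g * sigma f =
  (val u1 ^+ 2 * sigma g - g) * sigma f - (val u1 ^+ 2 * sigma f - f) * sigma g by ring.
by apply: dvdp_sub; apply: dvdp_mulr.
Qed.

Lemma GI (X : finType) (S : {set X}) (c : X -> nat -> F) (m : nat) (keep : pred nat) :
  {in S &, forall x y, (forall i, (i < m)%N -> keep i -> c x i = c y i) -> x = y} ->
  (#|S| <= #|F| ^ #|[pred i : 'I_m | keep i]|)%N.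
Proof.
move=> hinj.
pose phi x := [ffun i : 'I_m => if keep i then c x i else 0].
have <- : #|phi @: S| = #|S|.
  apply: card_in_imset => x y hx hy /ffunP he; apply: hinj => // i hi hk.
  by have := he (Ordinal hi); rewrite !ffunE /= hk.
have -> : (#|F| ^ #|[pred i : 'I_m | keep i]| = #|pffun_on (0:F)%R [pred i : 'I_m | keep i] (@predT F)|)%N.
  by rewrite card_pffun_on; congr (_ ^ _)%N; apply: eq_card => x.
apply: subset_leq_card; apply/subsetP => _ /imsetP[x _ ->].
apply/pffun_onP; split; last by move=> y _.
apply/subsetP => i; rewrite !inE ffunE /=; by case: (keep i); rewrite ?eqxx.
Qed.

Definition mon D (P : {poly F}) := (P \is monic) && (size P == D.+1).

Lemma mon_coefD D P : mon D P -> P`_D = 1.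
Proof. by case/andP=> /monicP h /eqP hs; move: h; rewrite lead_coefE hs. Qed.

Lemma mon_high D P i : mon D P -> (D < i)%N -> P`_i = 0.
Proof. by case/andP=> _ /eqP hs hi; rewrite nth_default // hs. Qed.

Lemma mon_sub_high D P P' i : mon D P -> mon D P' -> (D <= i)%N -> (P - P')`_i = 0.
Proof.
move=> hP hP' hi; rewrite coefB; case: (ltngtP D i) hi => // [h|<-] _.
  by rewrite !(mon_high _ h) ?subrr.
by rewrite !mon_coefD ?subrr.
Qed.

Lemma mon_size_sub D P P' : mon D P -> mon D P' -> (size (P - P')%R <= D)%N.
Proof. by move=> hP hP'; apply/leq_sizeP => i hi; exact: (mon_sub_high hP hP' hi). Qed.

Lemma sigma_odd0 (p : {poly F}) i : sigma p = p -> odd i -> p`_i = 0.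
Proof.
move=> hs hi; have := coef_sigma p i; rewrite hs -signr_odd hi expr1 mulN1r.
move/eqP; rewrite -subr_eq0 opprK -mulr2n -mulr_natl mulf_eq0 (negPf h2) /=.
by move/eqP.
Qed.

Lemma sigma_even0 (p : {poly F}) i : sigma p = - p -> ~~ odd i -> p`_i = 0.
Proof.
move=> hs hi; have := coef_sigma p i; rewrite hs -signr_odd (negPf hi) expr0 mul1r coefN.
move/eqP; rewrite eq_sym -subr_eq0 opprK -mulr2n -mulr_natl mulf_eq0 (negPf h2) /=.
by move/eqP.
Qed.

Lemma dvdXk_coef k (p : {poly F}) i : 'X^k %| p -> (i < k)%N -> p`_i = 0.
Proof. by case/dvdpP=> r -> hi; rewrite coefMXn hi. Qed.

Lemma cnt_monic N D : (#|[set P : {poly_N F} | mon D (val P)]| <= #|F| ^ D)%N.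
Proof.
have := @GI _ [set P : {poly_N F} | mon D (val P)] (fun P i => (val P)`_i) D predT.
rewrite cnt_all; apply => P P'; rewrite !inE => hP hP' he.
apply/val_inj/polyP => i; apply/eqP; rewrite -subr_eq0 -coefB; apply/eqP.
have [hi|hi] := ltnP i D; last exact: (mon_sub_high hP hP' hi).
by rewrite coefB he ?subrr.
Qed.

Lemma cnt_fiber N D k (P1 : {poly F}) : P1.[0] != 0 ->
  (#|[set P : {poly_N F} | mon D (val P) && rel k (val P) P1]| <= #|F| ^ (D - (minn D k)./2))%N.
Proof.
move=> hP1.
have := @GI _ [set P : {poly_N F} | mon D (val P) && rel k (val P) P1]
   (fun P i => (val P)`_i) D (fun i => ~~ (odd i && (i < k)%N)).
rewrite cnt_keep2; apply => P P'; rewrite !inE => /andP[hP r] /andP[hP' r'] he.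
apply/val_inj; apply/eqP; rewrite -subr_eq0; apply/eqP.
set d := val P - val P'.
have hd : forall i, ~~ (odd i && (i < k)%N) -> d`_i = 0.
  move=> i hi; have [hiD|hiD] := ltnP i D; last exact: (mon_sub_high hP hP' hiD).
  by rewrite coefB he ?subrr.
have hs : sigma d = - d.
  apply/polyP => i; rewrite coef_sigma coefN.
  case hi: (odd i && (i < k)%N); last by rewrite hd ?hi // mulr0 oppr0.
  by move/andP: hi => [ho _]; rewrite -signr_odd ho expr1 mulN1r.
have rd : rel k d P1 by apply: rel_lin.
have : 'X^k %| (sigma P1 + P1) * d.
  by move: rd; rewrite /rel hs; congr (_ %| _); ring.
move/U0; rewrite hornerD sigma0 -mulr2n -mulr_natl mulf_neq0 // => /(_ isT) hk.
apply/polyP => i; rewrite coef0.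
case hi: (odd i && (i < k)%N); last by rewrite hd ?hi.
by move/andP: hi => [_ hik]; apply: dvdXk_coef hk hik.
Qed.

Lemma cnt_even_mon N D :
  (#|[set P : {poly_N F} | mon D (val P) && (sigma (val P) == val P)]| <= #|F| ^ (D./2))%N.
Proof.
case hD: (odd D).
  rewrite (_ : [set P : {poly_N F} | _] = set0) ?cards0 //.
  apply/setP => P; rewrite !inE; apply/negP => /andP[hP /eqP hs].
  by have := sigma_odd0 hs hD; rewrite mon_coefD // => /eqP; rewrite oner_eq0.
have := @GI _ [set P : {poly_N F} | mon D (val P) && (sigma (val P) == val P)]
   (fun P i => (val P)`_i) D (fun i => ~~ odd i).
rewrite cnt_even (_ : (D - D./2 = D./2)%N); last by move: hD; lia.
apply => P P'; rewrite !inE => /andP[hP /eqP hs] /andP[hP' /eqP hs'] he.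
apply/val_inj/polyP => i.
have [hiD|hiD] := ltnP i D; last first.
  by apply/eqP; rewrite -subr_eq0 -coefB; apply/eqP; exact: (mon_sub_high hP hP' hiD).
case ho: (odd i); last by rewrite he ?ho.
by rewrite (sigma_odd0 hs ho) (sigma_odd0 hs' ho).
Qed.

Lemma size_sigma_le (p : {poly F}) n : (size p <= n)%N -> (size (sigma p) <= n)%N.
Proof.
move=> /leq_sizeP h; apply/leq_sizeP => j hj; by rewrite coef_sigma h ?mulr0.
Qed.

Lemma coprime_sigma (P : {poly F}) D :
  irreducible_poly P -> mon D P -> P.[0] != 0 -> sigma P != P -> coprimep P (sigma P).
Proof.
move=> hirr hP hP0 hne; rewrite coprimep_def; apply/negPn/negP => hs.
have hg := hirr _ hs (dvdp_gcdl P (sigma P)).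
have hd : P %| sigma P by rewrite -(eqp_dvdl _ hg) dvdp_gcdr.
have hsz : size (sigma P) = size P.
  apply/eqP; rewrite eqn_leq size_sigma_le //.
  case/andP: (hP) => _ /eqP ->; rewrite ltnNge; apply/negP => /leq_sizeP/(_ D (leqnn D)).
  rewrite coef_sigma mon_coefD // mulr1 => /eqP; by rewrite signr_eq0.
have : P %= sigma P by rewrite -dvdp_size_eqp // hsz.
case/eqpP => [[c1 c2] /= /andP[c10 c20] e].
have e0 : (c1 *: P)`_0 = (c2 *: sigma P)`_0 by rewrite e.
move: e0; rewrite !coefZ -!horner_coef0 sigma0.
move=> /(mulIf hP0) ec; move: e; rewrite ec => /(scalerI c20) e.
by move: hne; rewrite -e eqxx.
Qed.

Lemma size_prod_le (a b : {poly F}) m n : (size a <= m.+1)%N -> (size b <= n)%N ->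
  (size (a * b)%R <= m + n)%N.
Proof.
move=> ha hb; apply: (leq_trans (size_polyMleq a b)); lia.
Qed.

Lemma cnt_noneven N D k P : irreducible_poly P -> mon D P -> P.[0] != 0 -> sigma P != P ->
  (#|[set Q : {poly_N F} | mon D (val Q) && rel k P (val Q)]| <= #|F| ^ (D - (minn D.*2 k)./2))%N.
Proof.
move=> hirr hP hP0 hne.
have := @GI _ [set Q : {poly_N F} | mon D (val Q) && rel k P (val Q)]
   (fun Q i => (P * sigma (val Q) - val Q * sigma P)`_i) D.*2 (fun i => odd i && ~~ (i < k)%N).
rewrite cnt_odd_ge doubleK; apply => Q Q'; rewrite !inE => /andP[hQ r] /andP[hQ' r'] he.
apply/val_inj; apply/eqP; rewrite -subr_eq0; apply/eqP.
set d := val Q - val Q'.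
set g := P * sigma d - d * sigma P.
have eg : g = (P * sigma (val Q) - val Q * sigma P) - (P * sigma (val Q') - val Q' * sigma P).
  by rewrite /g /d sigmaB; ring.
have gk : 'X^k %| g by rewrite eg; apply: dvdp_sub.
have gs : sigma g = - g by rewrite /g sigmaB !sigmaM !sigmaK; ring.
have sd : (size d <= D)%N by apply: mon_size_sub.
have sP : (size P <= D.+1)%N by case/andP: hP => _ /eqP ->.
have gsz : (size g <= D.*2)%N.
  rewrite /g -addnn; apply: (leq_trans (size_polyD _ _)); rewrite size_polyN geq_max.
  apply/andP; split; first by apply: size_prod_le => //; apply: size_sigma_le.
  by rewrite mulrC; apply: size_prod_le => //; apply: size_sigma_le.
have g0 : g = 0.
  apply/polyP => i; rewrite coef0.
  have [hi|hi] := ltnP i D.*2; last by move/leq_sizeP: gsz; apply.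
  case ho: (odd i); last by apply: sigma_even0 gs _; rewrite ho.
  have [hik|hik] := ltnP i k; first exact: dvdXk_coef gk hik.
  rewrite eg coefB he ?subrr //; by rewrite ho -leqNgt.
have hdiv : P %| d * sigma P by apply/dvdpP; exists (sigma d); apply/eqP; rewrite eq_sym mulrC -subr_eq0 -/g g0.
move: hdiv; rewrite Gauss_dvdpl; last exact: coprime_sigma hirr hP hP0 hne.
move=> hd; apply/eqP; apply: contraT => dn0.
have := dvdp_leq dn0 hd; case/andP: hP => _ /eqP ->.
by rewrite ltnNge sd.
Qed.

Lemma decideP (Q : Prop) : reflect Q (decide Q).
Proof. by rewrite /decide; case: excluded_middle_informative => h; constructor. Qed.

Variables (nu k : nat).
Hypothesis hnu : (0 < nu)%N.
Local Notation T := {poly_(nu.+1) F}.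

Definition condp a (P : T) : bool :=
  [&& mon (nu %/ a)%N (val P), (val P).[0] != 0, decide (irreducible_poly (val P)) &
      (a * (nu %/ a)%N == nu)%N].

Definition Bn := ((if (k./2 <= nu)%N then #|F| ^ (nu - k./2) else 0) + #|F| ^ ((2*nu) %/ 3))%N.

Lemma qgt0 : (0 < #|F|)%N.
Proof. by apply/card_gt0P; exists 0. Qed.

Lemma good_le e : ((e + k./2 <= nu) || (3*e <= 2*nu))%N -> (#|F|^e <= Bn)%N.
Proof.
case/orP => h.
  have hk : (k./2 <= nu)%N by apply: leq_trans h; apply: leq_addl.
  rewrite /Bn hk; apply: leq_trans (leq_addr _ _); apply: leq_pexp2l; first exact: qgt0.
  lia.
apply: leq_trans (leq_addl _ _); apply: leq_pexp2l; first exact: qgt0.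
by rewrite leq_divRL //; rewrite mulnC.
Qed.

Lemma condp_mon a P : condp a P -> mon (nu %/ a)%N (val P).
Proof. by case/and4P. Qed.
Lemma condp_0 a P : condp a P -> (val P).[0] != 0.
Proof. by case/and4P. Qed.

Lemma cnt_condp a : (#|[set P : T | condp a P]| <= #|F| ^ (nu %/ a)%N)%N.
Proof.
apply: leq_trans (cnt_monic (nu.+1) (nu %/ a)%N); apply: subset_leq_card.
by apply/subsetP => P; rewrite !inE => /condp_mon.
Qed.

Lemma fiber2 (g : {poly F}) : g.[0] != 0 ->
  (#|[set P : T | condp 2 P && rel k (val P ^+ 2) g]| <= #|F| ^ (nu %/ 2 - (minn (nu %/ 2)%N k)./2))%N.
Proof.
move=> hg; case: (set_0Vmem [set P : T | condp 2 P && rel k (val P ^+ 2) g]) => [->|[P1]].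
  by rewrite cards0.
rewrite inE => /andP[c1 r1].
apply: leq_trans (cnt_fiber (nu.+1) (nu %/ 2)%N k (condp_0 c1)); apply: subset_leq_card.
apply/subsetP => P; rewrite !inE => /andP[c r]; rewrite condp_mon //=.
apply: rel_sq; [exact: condp_0 c | exact: condp_0 c1|].
by apply: rel_trans hg r (rel_sym r1).
Qed.

Lemma b1mul c : (true * c)%N = c. Proof. exact: mul1n. Qed.
Lemma b0mul c : (false * c)%N = 0%N. Proof. exact: mul0n. Qed.

Definition Nset a b := [set PQ : T * T | condp a PQ.1 && condp b PQ.2 &&
                                           rel k (val PQ.1 ^+ a) (val PQ.2 ^+ b)].

Lemma cond_facts a P : condp a P -> (a * (nu %/ a)%N = nu)%N /\ (0 < nu %/ a)%N.
Proof.
case/and4P => _ _ _ /eqP h; split => //; rewrite lt0n; apply/eqP => h0.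
by move: h hnu; rewrite h0 muln0 => <-.
Qed.

Lemma N_bound a b : (2 <= a)%N -> (2 <= b)%N -> (#|Nset a b| <= 2 * Bn)%N.
Proof.
move=> ha hb.
case: (set_0Vmem (Nset a b)) => [->|[[P0 Q0]]]; first by rewrite cards0.
rewrite inE /= => /andP[/andP[cP0 cQ0] _].
have [hDa hD0] := cond_facts cP0; have [hEb hE0] := cond_facts cQ0.
set D := (nu %/ a)%N in hDa hD0; set E := (nu %/ b)%N in hEb hE0.
rewrite mul2n -addnn.
have e1 : (#|Nset a b| = \sum_P #|[set Q : T | condp a P && condp b Q &&
                                   rel k (val P ^+ a) (val Q ^+ b)]|)%N.
  exact: (card_pair1 (fun (P Q : T) => condp a P && condp b Q && rel k (val P ^+ a) (val Q ^+ b))).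
have e2 : (#|Nset a b| = \sum_Q #|[set P : T | condp a P && condp b Q &&
                                   rel k (val P ^+ a) (val Q ^+ b)]|)%N.
  exact: (card_pair2 (fun (P Q : T) => condp a P && condp b Q && rel k (val P ^+ a) (val Q ^+ b))).
case: (ltngtP a 2) => [|ha3|ea]; first by rewrite ltnNge ha.
  case: (ltngtP b 2) => [|hb3|eb]; first by rewrite ltnNge hb.
  -
    have h3D : (3 * D <= nu)%N by rewrite -{1}hDa leq_mul2r ha3 orbT.
    have h3E : (3 * E <= nu)%N by rewrite -{1}hEb leq_mul2r hb3 orbT.
    apply: leq_trans (leq_addr _ _).
    rewrite e1; apply: leq_trans (sum_le_card (A := condp a) (c := #|[set Q : T | condp b Q]|) _) _.
      move=> P; case cP: (condp a P); last by rewrite (_ : [set Q : T | _] = set0) ?cards0 //; apply/setP => Q; rewrite !inE cP.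
      by rewrite b1mul; apply: subset_leq_card; apply/subsetP => Q; rewrite !inE /= => /andP[-> _].
    apply: leq_trans (leq_mul (cnt_condp a) (cnt_condp b)) _.
    by rewrite -expnD; apply: good_le; lia.
  -
    have h3D : (3 * D <= nu)%N by rewrite -{1}hDa leq_mul2r ha3 orbT.
    have hE2 : (2 * (nu %/ 2))%N = nu by move: hEb; rewrite /E eb.
    apply: leq_trans (leq_addr _ _).
    rewrite e1; apply: leq_trans (sum_le_card (A := condp a) (c := #|F| ^ (nu %/ 2 - (minn (nu %/ 2)%N k)./2)) _) _.
      move=> P; case cP: (condp a P); last by rewrite (_ : [set Q : T | _] = set0) ?cards0 //; apply/setP => Q; rewrite !inE cP.
      have hg : (val P ^+ a).[0] != 0 by rewrite horner_exp expf_neq0 // (condp_0 cP).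
      rewrite b1mul; apply: (leq_trans _ (fiber2 hg)).
      apply: subset_leq_card; apply/subsetP => Q; rewrite !inE /= eb => /andP[-> r] /=.
      exact: rel_sym.
    apply: leq_trans (leq_mul (cnt_condp a) (leqnn _)) _.
    rewrite -expnD; apply: good_le; move: hE2 hD0 h3D; rewrite /D; lia.
case: (ltngtP b 2) => [|hb3|eb]; first by rewrite ltnNge hb.
-
  have h3E : (3 * E <= nu)%N by rewrite -{1}hEb leq_mul2r hb3 orbT.
  have hD2 : (2 * (nu %/ 2))%N = nu by move: hDa; rewrite /D ea.
  apply: leq_trans (leq_addr _ _).
  rewrite e2; apply: leq_trans (sum_le_card (A := condp b) (c := #|F| ^ (nu %/ 2 - (minn (nu %/ 2)%N k)./2)) _) _.
    move=> Q; case cQ: (condp b Q); last by rewrite (_ : [set P : T | _] = set0) ?cards0 //; apply/setP => P; rewrite !inE /= andbF.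
    have hg : (val Q ^+ b).[0] != 0 by rewrite horner_exp expf_neq0 // (condp_0 cQ).
    rewrite b1mul; apply: (leq_trans _ (fiber2 hg)).
    apply: subset_leq_card; apply/subsetP => P; rewrite !inE /= ea andbT => /andP[-> r] //.
  apply: leq_trans (leq_mul (cnt_condp b) (leqnn _)) _.
  rewrite -expnD; apply: good_le; move: hD2 hE0 h3E; rewrite /E; lia.
-
  have hD2 : (2 * (nu %/ 2))%N = nu by move: hDa; rewrite /D ea.
  rewrite e1 ea eb.
  set D2 := (nu %/ 2)%N in hD2 *.
  apply: leq_trans (sum_le_card2 (A := fun P => condp 2 P && (sigma (val P) == val P)) (B := condp 2)
      (c := #|F| ^ (D2 - (minn D2 k)./2)) (d := #|F| ^ (D2 - (minn D2.*2 k)./2)) _) _.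
    move=> P; case cP: (condp 2 P); last first.
      by rewrite (_ : [set Q : T | _] = set0) ?cards0 //; apply/setP => Q; rewrite !inE.
    have hP0 := condp_0 cP; have hPm := condp_mon cP.
    case he: (sigma (val P) == val P); rewrite /= ?b1mul ?b0mul.
      apply: leq_trans (leq_addr _ _).
      apply: (leq_trans _ (cnt_fiber (nu.+1) D2 k hP0)).
      apply: subset_leq_card; apply/subsetP => Q; rewrite !inE /= => /andP[cQ r].
      rewrite (condp_mon cQ) /=; apply: rel_sym; exact: rel_sq (condp_0 cQ) r.
    rewrite add0n; case/and4P: cP => _ _ /decideP hirr _.
    apply: (leq_trans _ (cnt_noneven (nu.+1) k hirr hPm hP0 (negbT he))).
    apply: subset_leq_card; apply/subsetP => Q; rewrite !inE /= => /andP[cQ r].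
    rewrite (condp_mon cQ) /=; exact: rel_sq (condp_0 cQ) r.
  apply: leq_add.
    have hev : (#|[set P : T | condp 2 P && (sigma (val P) == val P)]| <= #|F| ^ D2./2)%N.
      apply: leq_trans (cnt_even_mon (nu.+1) D2); apply: subset_leq_card.
      by apply/subsetP => P; rewrite !inE => /andP[/condp_mon -> ->].
    apply: leq_trans (leq_mul hev (leqnn _)) _.
    by rewrite -expnD; apply: good_le; move: hD2; lia.
  apply: leq_trans (leq_mul (cnt_condp 2) (leqnn _)) _.
  by rewrite -expnD; apply: good_le; move: hD2; rewrite -/D2; lia.
Qed.

Lemma lambda_decomp (f : T) : (val f) \is monic -> size (val f) == nu.+1 -> (val f).[0] != 0 ->
  ~~ decide (irreducible_poly (val f)) -> (0 < Lambda (val f))%N ->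
  (Lambda (val f) <= nu)%N /\
  exists (a : 'I_nu.+1) (P : T), [&& (2 <= a)%N, condp a P & val f == val P ^+ a].
Proof.
move=> fm /eqP fs f0 firr.
rewrite /Lambda; case: decideP => [hex|]; last by rewrite ltnn.
have := epsilon_spec (inhabits (0 : {poly F})) (primepow_base (val f)) hex.
set P := epsilon _ _ => -[Pm [Pirr [j [j0 ef]]]] _.
have hsz : ((size P).-1 * j)%N = nu by rewrite -size_exp -ef fs.
have hP1 : (1 < size P)%N by case: Pirr.
have hj1 : j != 1%N.
  apply/eqP => ej; move: firr; rewrite ef ej expr1.
  by case: decideP.
have hjnu : (j <= nu)%N by rewrite -hsz leq_pmull // -ltnS prednK // ltnW.
have hD : (nu %/ j)%N = (size P).-1 by rewrite -hsz mulnK.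
split; first by rewrite -hsz leq_pmulr.
have hPs : (size P <= nu.+1)%N by rewrite -hsz; move: hP1 j0; clear; nia.
exists (Ordinal (hjnu : (j < nu.+1)%N)), (npolyp (nu.+1) P).
rewrite /= npolypK //; apply/and3P; split => //.
- by move: j0 hj1; clear; lia.
- rewrite /condp /= npolypK // hD -hsz mulnC eqxx andbT.
  apply/and3P; split.
  + by rewrite /mon Pm /= prednK ?eqxx // ltnW.
  + by apply: contra f0; rewrite ef horner_exp => /eqP ->; rewrite expr0n eqn0Ngt j0.
  + by apply/decideP.
- by rewrite ef.
Qed.

Definition Gf (f : T) := [&& (val f) \is monic, size (val f) == nu.+1, (val f).[0] != 0,
   ~~ decide (irreducible_poly (val f)) & (0 < Lambda (val f))%N].

Definition Aset (u : {poly_k F}) := [set f : T | Gf f && (Umod k (val f) == Some u)].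

Definition Pairs := [set fg : T * T | Gf fg.1 && Gf fg.2 && rel k (val fg.1) (val fg.2)].

Lemma Rfun_le u : (Rfun nu u <= nu * #|Aset u|)%N.
Proof.
rewrite /Rfun big_mkcond /= mulnC.
apply: (leq_trans _ (sum_le_card (A := fun f => Gf f && (Umod k (val f) == Some u)) _)); last first.
  by move=> f; exact: leqnn.
apply: leq_sum => f _; case: ifP => //= /and5P[g1 g2 g3 g4 g5].
case hL: (0 < Lambda (val f))%N; last by move: hL; rewrite lt0n => /negbFE/eqP ->.
have [hl _] := lambda_decomp g1 g2 g3 g4 hL.
by rewrite /Gf g1 g2 g3 g4 hL g5 /= b1mul.
Qed.

Lemma sum_pairs : (\sum_(u in S1k F k) #|setX (Aset u) (Aset u)| <= #|Pairs|)%N.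
Proof.
have -> : (\sum_(u in S1k F k) #|setX (Aset u) (Aset u)| =
    #|[set x : {poly_k F} * (T * T) | (x.1 \in S1k F k) && (x.2 \in setX (Aset x.1) (Aset x.1))]|)%N.
  rewrite (card_pair1 (fun u fg => (u \in S1k F k) && (fg \in setX (Aset u) (Aset u)))) big_mkcond /=.
  apply: eq_bigr => u _; case: ifP => hu.
    by apply: eq_card => fg; rewrite !inE.
  by rewrite (_ : [set _ | _] = set0) ?cards0 //; apply/setP => fg; rewrite !inE.
rewrite -(@card_in_imset _ _ snd); last first.
  move=> [u1 [f1 g1]] [u2 [f2 g2]]; rewrite !inE /= => /andP[_ /andP[k1 _]] /andP[_ /andP[k2 _]] /= [e1 e2].
  subst f2 g2; move: k1 k2; rewrite ?inE => /andP[_ /eqP e1] /andP[_]; rewrite e1 => /eqP [->] //.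
apply: subset_leq_card; apply/subsetP => _ /imsetP[[u [f g]] hx ->].
move: hx; rewrite !inE /= => /andP[_ /andP[/andP[hf ef] /andP[hg eg]]].
by rewrite hf hg /=; apply: Umod_rel (eqP ef) (eqP eg).
Qed.

Lemma sumR2_le : (sumR2 F k nu <= nu ^ 2 * #|Pairs|)%N.
Proof.
rewrite /sumR2; apply: leq_trans (leq_mul (leqnn (nu ^ 2)) sum_pairs); rewrite big_distrr /=.
apply: leq_sum => u _; rewrite cardsX -!mulnn.
have h := Rfun_le u; apply: leq_trans (leq_mul h h) _.
by rewrite mulnACA.
Qed.

Definition W2 := [set x : ('I_nu.+1 * 'I_nu.+1) * (T * T) |
   (2 <= x.1.1)%N && (2 <= x.1.2)%N && (x.2 \in Nset x.1.1 x.1.2)].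

Lemma Pairs_le : (#|Pairs| <= #|W2|)%N.
Proof.
pose phi (x : ('I_nu.+1 * 'I_nu.+1) * (T * T)) : T * T :=
  (npolyp (nu.+1) (val x.2.1 ^+ x.1.1), npolyp (nu.+1) (val x.2.2 ^+ x.1.2)).
apply: leq_trans (leq_imset_card phi W2); apply: subset_leq_card.
apply/subsetP => -[f g]; rewrite inE /= => /andP[/andP[hf hg] r].
case/and5P: (hf) => f1 f2 f3 f4 f5; case/and5P: (hg) => g1 g2 g3 g4 g5.
have [_ [a [P /and3P[ha cP ef]]]] := lambda_decomp f1 f2 f3 f4 f5.
have [_ [b [Q /and3P[hb cQ eg]]]] := lambda_decomp g1 g2 g3 g4 g5.
apply/imsetP; exists ((a, b), (P, Q)).
  by rewrite inE /= ha hb /= inE /= cP cQ /= -(eqP ef) -(eqP eg).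
rewrite /phi /=; congr (_, _); apply: val_inj; rewrite /= npolypK //.
- by rewrite -(eqP ef).
- by rewrite -(eqP ef) size_npoly.
- by rewrite -(eqP eg).
- by rewrite -(eqP eg) size_npoly.
Qed.

Lemma W2_le : (#|W2| <= (nu.+1 * nu.+1) * (2 * Bn))%N.
Proof.
rewrite (card_pair1 (fun (ab : 'I_nu.+1 * 'I_nu.+1) (PQ : T * T) =>
    (2 <= ab.1)%N && (2 <= ab.2)%N && (PQ \in Nset ab.1 ab.2))).
rewrite (_ : (nu.+1 * nu.+1)%N = #|[set x : 'I_nu.+1 * 'I_nu.+1 | predT x]|); last first.
  by rewrite -[in LHS](card_ord nu.+1) -card_prod; apply: eq_card => x; rewrite inE.
apply: (leq_trans _ (sum_le_card (A := @predT ('I_nu.+1 * 'I_nu.+1)) (c := (2 * Bn)%N) _)); last first.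
  by move=> x; exact: leqnn.
apply: leq_sum => -[a b] _ /=; rewrite b1mul.
case hab: ((2 <= a)%N && (2 <= b)%N).
  case/andP: hab => ha hb; apply: (leq_trans _ (N_bound ha hb)).
  by apply: subset_leq_card; apply/subsetP => PQ; rewrite inE.
by rewrite (_ : [set _ | _] = set0) ?cards0 //; apply/setP => PQ; rewrite !inE.
Qed.

Lemma sumR2_bound : (sumR2 F k nu <= nu ^ 2 * ((nu.+1 * nu.+1) * (2 * Bn)))%N.
Proof.
apply: leq_trans sumR2_le _; apply: leq_mul => //.
exact: leq_trans Pairs_le W2_le.
Qed.
End Alg.
Lemma two_neq0 (F : finFieldType) : odd #|F| -> (2:F) != 0.
Proof.
move=> hodd; apply/negP=> /eqP h2.
have c2 : (2%N \in [pchar F]) by rewrite inE /= h2 eqxx.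
have := card_pprimeChar c2.
move=> /= hc.
have : (1 < #|F|)%N := finNzRing_gt1 F.
move: hodd; rewrite hc.
case: (logn 2 _) => [|n] //=.
by rewrite expnS oddM.
Qed.

Definition Cn (nu : nat) := (nu ^ 2 * (nu.+1 * nu.+1) * 2)%nat.

Lemma Cn_gt0 nu : (0 < nu)%nat -> (0 < Cn nu)%nat.
Proof. by move=> h; rewrite /Cn !muln_gt0 andbT h. Qed.

Lemma sumR2_Cn (F : finFieldType) (nu k : nat) : odd #|F| -> (0 < nu)%nat ->
  (sumR2 F k nu <= Cn nu * Bn F nu k)%nat.
Proof.
move=> hodd hnu; have h2 := two_neq0 hodd.
apply: leq_trans (@sumR2_bound F h2 nu k hnu) _.
by rewrite /Cn -!mulnA leqnn.
Qed.

End Dev.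

From Stdlib Require Import Reals Lra.

Theorem lemma6p9 (nu : nat) (hnu : (1 <= nu)%N) :
  exists C : R, (0 < C)%R /\
    forall (F : finFieldType) (k : nat),
      odd #|F| -> (1 <= k)%N ->
      let q := INR #|F| in
      let kappa := INR (k./2) in
      (INR (sumR2 F k nu) / Rpower q kappa
         <= C * (Rpower q (INR nu - 2 * kappa)
                 + Rpower q (2 / 3 * INR nu - kappa)))%R.
Proof.
exists (INR (Dev.Cn nu)); split.
  by apply: lt_0_INR; apply/ltP; apply: Dev.Cn_gt0.
move=> F k hodd hk q kappa.
have hS := Dev.sumR2_Cn k hodd hnu.
set B := Dev.Bn F nu k in hS.
have hq0 : (0 < q)%R by apply: lt_0_INR; apply/ltP; apply: Dev.qgt0.
have hq1 : (1 <= q)%R.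
  have -> : 1%R = INR 1 by [].
  by apply: le_INR; apply/leP; apply: Dev.qgt0.
have INRX : forall m n, INR (expn m n) = (INR m ^ n)%R.
  move=> m; elim=> [|n IH]; first by [].
  by rewrite expnS -multE mult_INR IH /= Rmult_comm.
have hK : (0 < Rpower q kappa)%R by apply: exp_pos.
have hB : (INR B <= Rpower q (INR nu - kappa) + Rpower q (2 / 3 * INR nu))%R.
  rewrite /B /Dev.Bn -plusE plus_INR; apply: Rplus_le_compat.
    case: ifP => hkn.
      rewrite INRX -Rpower_pow // -minusE minus_INR; last by apply/leP.
      by apply: Rle_refl.
    by apply: Rlt_le; apply: exp_pos.
  rewrite INRX -Rpower_pow //; apply: Rle_Rpower => //.
  have h3 : (3 * ((2 * nu) %/ 3) <= 2 * nu)%nat by rewrite mulnC leq_trunc_div.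
  move/leP/le_INR: h3; rewrite -?multE !mult_INR /=.
  move=> h3; lra.
have e1 : Rpower q (INR nu - kappa) = (Rpower q (INR nu - 2 * kappa) * Rpower q kappa)%R.
  by rewrite -Rpower_plus; f_equal; lra.
have e2 : Rpower q (2 / 3 * INR nu) = (Rpower q (2 / 3 * INR nu - kappa) * Rpower q kappa)%R.
  by rewrite -Rpower_plus; f_equal; lra.
have hS' : (INR (sumR2 F k nu) <= INR (Dev.Cn nu) * INR B)%R.
  by rewrite -mult_INR multE; apply: le_INR; apply/leP.
have hmain : (INR (sumR2 F k nu) <= INR (Dev.Cn nu) * (Rpower q (INR nu - 2 * kappa)
                 + Rpower q (2 / 3 * INR nu - kappa)) * Rpower q kappa)%R.
  rewrite Rmult_assoc Rmult_plus_distr_r -e1 -e2; apply: Rle_trans hS' _.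
  by apply: Rmult_le_compat_l => //; apply: pos_INR.
rewrite /Rdiv; apply: Rle_trans (Rmult_le_compat_r _ _ _ (Rlt_le _ _ (Rinv_0_lt_compat _ hK)) hmain) _.
rewrite Rmult_assoc Rinv_r ?Rmult_1_r; first by apply: Rle_refl.
by apply: Rgt_not_eq.
Qed.
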